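(* Let $N\ge 1$, let $\mathbf{a}_1,\dots,\mathbf{a}_N\in\mathbb{R}^3$ (base station positions, $\mathbf{a}_i=(a_i,b_i,c_i)$) and $\mathbf{x}_G\in\mathbb{R}^3$, and set $d_i=\|\mathbf{x}_G-\mathbf{a}_i\|$. Define $$F_2(\mathbf{x})=\frac14\sum_{i=1}^N\bigl(\|\mathbf{x}-\mathbf{a}_i\|^2-d_i^2\bigr)^2,\qquad F_{L2}(\mathbf{x},\lambda)=\frac14\sum_{i=1}^N\bigl(\|\mathbf{x}-\mathbf{a}_i\|^2+\lambda^2-d_i^2\bigr)^2$$ for $\mathbf{x}\in\mathbb{R}^3$, $\lambda\in\mathbb{R}$. Assume $\mathbf{x}_G$ is the unique global minimizer of $F_2$, and let $\mathbf{x}_L\ne\mathbf{x}_G$ be a local minimizer of $F_2$ at which $\nabla F_2(\mathbf{x}_L)=0$ and the second partial derivatives $\partial^2F_2/\partial x^2,\ \partial^2F_2/\partial y^2,\ \partial^2F_2/\partial z^2$ are positive. Then $(\mathbf{x}_L,0)$ is a saddle point of $F_{L2}$: namely $\nabla_{\mathbf{x}}F_{L2}(\mathbf{x}_L,0)=0$, $\frac{\partial F_{L2}}{\partial\lambda}(\mathbf{x}_L,0)=0$, $\frac{\partial^2F_{L2}}{\partial x\,\partial\lambda}(\mathbf{x}_L,0)=\frac{\partial^2F_{L2}}{\partial y\,\partial\lambda}(\mathbf{x}_L,0)=\frac{\partial^2F_{L2}}{\partial z\,\partial\lambda}(\mathbf{x}_L,0)=0$, the second derivatives of $F_{L2}$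 in $x,y,z$ at $(\mathbf{x}_L,0)$ are positive, and $\frac{\partial^2F_{L2}}{\partial\lambda^2}(\mathbf{x}_L,0)<0$.
   Context: This models Time of Arrival localization with exact distance measurements $d_i$ from known base stations $\mathbf{a}_i$ to an object at $\mathbf{x}_G$; $F_{L2}$ is the objective $F_2$ augmented by an additional variable $\lambda$. Note $F_{L2}(\mathbf{x},0)=F_2(\mathbf{x})$ and $F_2(\mathbf{x}_G)=0$. *)

(* Defs.v *)
From Stdlib Require Import Reals.
From Coquelicot Require Import Coquelicot.
Open Scope R_scope.

(* Base stations a_i = (a i, b i, c i), i = 0..N-1; point x = (x, y, z). *)

Definition sqdist (x y z p q r : R) : R := (x - p)^2 + (y - q)^2 + (z - r)^2.

Definition sumN (N : nat) (f : nat -> R) : R := sum_f_R0 f (pred N).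

Definition dist_i (a b c : nat -> R) (xg yg zg : R) (i : nat) : R :=
  sqrt (sqdist xg yg zg (a i) (b i) (c i)).

Definition F2 (N : nat) (a b c : nat -> R) (xg yg zg : R) (x y z : R) : R :=
  / 4 * sumN N (fun i =>
     (sqdist x y z (a i) (b i) (c i) - (dist_i a b c xg yg zg i)^2)^2).

Definition FL2 (N : nat) (a b c : nat -> R) (xg yg zg : R) (x y z l : R) : R :=
  / 4 * sumN N (fun i =>
     (sqdist x y z (a i) (b i) (c i) + l^2 - (dist_i a b c xg yg zg i)^2)^2).

(* Main.v *)
Require Import Defs.
From Stdlib Require Import Reals Lra Psatz FunctionalExtensionality.
From Coquelicot Require Import Coquelicot.
Open Scope R_scope.

Lemma is_derive_sumf (g : nat -> R -> R) (g' : nat -> R) x n :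
  (forall i, is_derive (g i) x (g' i)) ->
  is_derive (fun t => sum_f_R0 (fun i => g i t) n) x (sum_f_R0 g' n).
Proof.
  intros H. induction n as [|n IH]; simpl.
  - apply H.
  - apply (is_derive_plus (fun t => sum_f_R0 (fun i => g i t) n) (g (S n))); auto.
Qed.

Lemma Derive_sum4 (g : nat -> R -> R) (g' : nat -> R) n x :
  (forall i, is_derive (g i) x (g' i)) ->
  Derive (fun t => / 4 * sum_f_R0 (fun i => g i t) n) x = / 4 * sum_f_R0 g' n.
Proof.
  intros H. apply is_derive_unique.
  apply (is_derive_scal (fun t => sum_f_R0 (fun i => g i t) n)).
  now apply is_derive_sumf.
Qed.

Lemma sum_ext (f g : nat -> R) n : (forall i, f i = g i) -> sum_f_R0 f n = sum_f_R0 g n.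
Proof. intros H; induction n; simpl; rewrite ?IHn, ?H; auto. Qed.

Lemma sum_zero (f : nat -> R) n : (forall i, f i = 0) -> sum_f_R0 f n = 0.
Proof. intros H; induction n; simpl; rewrite ?IHn, H; ring. Qed.

Lemma sum_scal (f : nat -> R) k n :
  sum_f_R0 (fun i => k * f i) n = k * sum_f_R0 f n.
Proof. induction n; simpl; rewrite ?IHn; ring. Qed.

Lemma sum_lin2 (f g : nat -> R) p n :
  sum_f_R0 (fun i => f i + p * g i) n = sum_f_R0 f n + p * sum_f_R0 g n.
Proof. induction n; simpl; rewrite ?IHn; ring. Qed.

Lemma sum_lin3 (f g h : nat -> R) p q r n :
  sum_f_R0 (fun i => p * f i + q * g i + r * h i) n
  = p * sum_f_R0 f n + q * sum_f_R0 g n + r * sum_f_R0 h n.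
Proof. induction n; simpl; rewrite ?IHn; ring. Qed.

Lemma sum_pos (f : nat -> R) n : (forall i, 0 <= f i) -> 0 <= sum_f_R0 f n.
Proof. intros H; induction n; simpl; auto. specialize (H (S n)); lra. Qed.

Lemma dx x y z p q r l d : is_derive (fun t => (sqdist t y z p q r + l^2 - d)^2) x
  (4*(sqdist x y z p q r + l^2 - d)*(x-p)).
Proof. unfold sqdist. auto_derive. trivial. ring. Qed.
Lemma dy x y z p q r l d : is_derive (fun t => (sqdist x t z p q r + l^2 - d)^2) y
  (4*(sqdist x y z p q r + l^2 - d)*(y-q)).
Proof. unfold sqdist. auto_derive. trivial. ring. Qed.
Lemma dz x y z p q r l d : is_derive (fun t => (sqdist x y t p q r + l^2 - d)^2) z
  (4*(sqdist x y z p q r + l^2 - d)*(z-r)).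
Proof. unfold sqdist. auto_derive. trivial. ring. Qed.
Lemma dl S l d : is_derive (fun t => (S + t^2 - d)^2) l (4*l*(S + l^2 - d)).
Proof. auto_derive. trivial. ring. Qed.
Lemma dxF x y z p q r d : is_derive (fun t => (sqdist t y z p q r - d)^2) x
  (4*(sqdist x y z p q r - d)*(x-p)).
Proof. unfold sqdist. auto_derive. trivial. ring. Qed.
Lemma dyF x y z p q r d : is_derive (fun t => (sqdist x t z p q r - d)^2) y
  (4*(sqdist x y z p q r - d)*(y-q)).
Proof. unfold sqdist. auto_derive. trivial. ring. Qed.
Lemma dzF x y z p q r d : is_derive (fun t => (sqdist x y t p q r - d)^2) z
  (4*(sqdist x y z p q r - d)*(z-r)).
Proof. unfold sqdist. auto_derive. trivial. ring. Qed.
Lemma dlin A B l : is_derive (fun t => 4*(A + t^2 - B)) l (4*(2*l)).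
Proof. auto_derive. trivial. ring. Qed.
Lemma dlin2 A B l : is_derive (fun t => 4*t*(A + t^2 - B)) l (4*(A + l^2 - B) + 4*l*(2*l)).
Proof. auto_derive. trivial. ring. Qed.

Theorem mainTheorem1 (N : nat) (a b c : nat -> R) (xg yg zg xl yl zl : R) :
  (1 <= N)%nat ->
  (* x_G is the unique global minimizer of F2 *)
  (forall x y z, (x, y, z) <> (xg, yg, zg) ->
     F2 N a b c xg yg zg xg yg zg < F2 N a b c xg yg zg x y z) ->
  (* x_L <> x_G *)
  (xl, yl, zl) <> (xg, yg, zg) ->
  (* x_L is a local minimizer of F2 *)
  (exists eps : R, 0 < eps /\
     forall x y z, sqrt (sqdist x y z xl yl zl) < eps ->
       F2 N a b c xg yg zg xl yl zl <= F2 N a b c xg yg zg x y z) ->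
  (* grad F2 (x_L) = 0 *)
  Derive (fun t => F2 N a b c xg yg zg t yl zl) xl = 0 ->
  Derive (fun t => F2 N a b c xg yg zg xl t zl) yl = 0 ->
  Derive (fun t => F2 N a b c xg yg zg xl yl t) zl = 0 ->
  (* pure second partials of F2 at x_L are positive *)
  0 < Derive (fun s => Derive (fun t => F2 N a b c xg yg zg t yl zl) s) xl ->
  0 < Derive (fun s => Derive (fun t => F2 N a b c xg yg zg xl t zl) s) yl ->
  0 < Derive (fun s => Derive (fun t => F2 N a b c xg yg zg xl yl t) s) zl ->
  (* conclusion: (x_L, 0) is a saddle point of FL2 *)
  Derive (fun t => FL2 N a b c xg yg zg t yl zl 0) xl = 0 /\
  Derive (fun t => FL2 N a b c xg yg zg xl t zl 0) yl = 0 /\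
  Derive (fun t => FL2 N a b c xg yg zg xl yl t 0) zl = 0 /\
  Derive (fun l => FL2 N a b c xg yg zg xl yl zl l) 0 = 0 /\
  Derive (fun l => Derive (fun t => FL2 N a b c xg yg zg t yl zl l) xl) 0 = 0 /\
  Derive (fun l => Derive (fun t => FL2 N a b c xg yg zg xl t zl l) yl) 0 = 0 /\
  Derive (fun l => Derive (fun t => FL2 N a b c xg yg zg xl yl t l) zl) 0 = 0 /\
  0 < Derive (fun s => Derive (fun t => FL2 N a b c xg yg zg t yl zl 0) s) xl /\
  0 < Derive (fun s => Derive (fun t => FL2 N a b c xg yg zg xl t zl 0) s) yl /\
  0 < Derive (fun s => Derive (fun t => FL2 N a b c xg yg zg xl yl t 0) s) zl /\
  Derive (fun s => Derive (fun l => FL2 N a b c xg yg zg xl yl zl l) s) 0 < 0.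
Proof.
  intros HN Hmin Hne _ Gx Gy Gz Hx Hy Hz.
  assert (E0 : forall x y z, FL2 N a b c xg yg zg x y z 0 = F2 N a b c xg yg zg x y z).
  { intros. unfold FL2, F2, sumN. f_equal. apply sum_ext. intros. f_equal. ring. }
  replace (fun t => FL2 N a b c xg yg zg t yl zl 0) with (fun t => F2 N a b c xg yg zg t yl zl)
    by (apply functional_extensionality; intros; now rewrite E0).
  replace (fun t => FL2 N a b c xg yg zg xl t zl 0) with (fun t => F2 N a b c xg yg zg xl t zl)
    by (apply functional_extensionality; intros; now rewrite E0).
  replace (fun t => FL2 N a b c xg yg zg xl yl t 0) with (fun t => F2 N a b c xg yg zg xl yl t)
    by (apply functional_extensionality; intros; now rewrite E0).
  set (d2 := fun i => dist_i a b c xg yg zg i ^ 2).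
  assert (Hd2 : forall i, d2 i = sqdist xg yg zg (a i) (b i) (c i)).
  { intros i. unfold d2, dist_i. rewrite <- Rsqr_pow2, Rsqr_sqrt; auto.
    unfold sqdist. pose proof (pow2_ge_0 (xg - a i)); pose proof (pow2_ge_0 (yg - b i)); pose proof (pow2_ge_0 (zg - c i)); lra. }
  assert (GX : Derive (fun t => F2 N a b c xg yg zg t yl zl) xl =
     / 4 * sum_f_R0 (fun i => 4*(sqdist xl yl zl (a i) (b i) (c i) - d2 i)*(xl - a i)) (pred N)).
  { unfold F2, sumN. apply Derive_sum4. intros; apply dxF. }
  assert (GY : Derive (fun t => F2 N a b c xg yg zg xl t zl) yl =
     / 4 * sum_f_R0 (fun i => 4*(sqdist xl yl zl (a i) (b i) (c i) - d2 i)*(yl - b i)) (pred N)).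
  { unfold F2, sumN. apply Derive_sum4. intros; apply dyF. }
  assert (GZ : Derive (fun t => F2 N a b c xg yg zg xl yl t) zl =
     / 4 * sum_f_R0 (fun i => 4*(sqdist xl yl zl (a i) (b i) (c i) - d2 i)*(zl - c i)) (pred N)).
  { unfold F2, sumN. apply Derive_sum4. intros; apply dzF. }
  assert (IX : forall l, Derive (fun t => FL2 N a b c xg yg zg t yl zl l) xl =
     / 4 * sum_f_R0 (fun i => 4*(sqdist xl yl zl (a i) (b i) (c i) + l^2 - d2 i)*(xl - a i)) (pred N)).
  { intros; unfold FL2, sumN. apply Derive_sum4. intros; apply dx. }
  assert (IY : forall l, Derive (fun t => FL2 N a b c xg yg zg xl t zl l) yl =
     / 4 * sum_f_R0 (fun i => 4*(sqdist xl yl zl (a i) (b i) (c i) + l^2 - d2 i)*(yl - b i)) (pred N)).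
  { intros; unfold FL2, sumN. apply Derive_sum4. intros; apply dy. }
  assert (IZ : forall l, Derive (fun t => FL2 N a b c xg yg zg xl yl t l) zl =
     / 4 * sum_f_R0 (fun i => 4*(sqdist xl yl zl (a i) (b i) (c i) + l^2 - d2 i)*(zl - c i)) (pred N)).
  { intros; unfold FL2, sumN. apply Derive_sum4. intros; apply dz. }
  assert (IL : forall l, Derive (fun l => FL2 N a b c xg yg zg xl yl zl l) l =
     / 4 * sum_f_R0 (fun i => 4*l*(sqdist xl yl zl (a i) (b i) (c i) + l^2 - d2 i)) (pred N)).
  { intros; unfold FL2, sumN. apply Derive_sum4. intros; apply dl. }
  split; [exact Gx|]. split; [exact Gy|]. split; [exact Gz|].
  split. { rewrite IL, sum_zero; [ring|]. intros; ring. }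
  split.
  { rewrite (Derive_ext _ _ _ IX).
    rewrite (Derive_sum4 (fun i t => 4*(sqdist xl yl zl (a i) (b i) (c i) + t^2 - d2 i)*(xl - a i))
      (fun i => 4*(2*0)*(xl - a i))).
    - rewrite sum_zero; [ring|]. intros; ring.
    - intros. auto_derive; [trivial|ring]. }
  split.
  { rewrite (Derive_ext _ _ _ IY).
    rewrite (Derive_sum4 (fun i t => 4*(sqdist xl yl zl (a i) (b i) (c i) + t^2 - d2 i)*(yl - b i))
      (fun i => 4*(2*0)*(yl - b i))).
    - rewrite sum_zero; [ring|]. intros; ring.
    - intros. auto_derive; [trivial|ring]. }
  split.
  { rewrite (Derive_ext _ _ _ IZ).
    rewrite (Derive_sum4 (fun i t => 4*(sqdist xl yl zl (a i) (b i) (c i) + t^2 - d2 i)*(zl - c i))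
      (fun i => 4*(2*0)*(zl - c i))).
    - rewrite sum_zero; [ring|]. intros; ring.
    - intros. auto_derive; [trivial|ring]. }
  split; [exact Hx|]. split; [exact Hy|]. split; [exact Hz|].
  rewrite (Derive_ext _ _ _ IL).
  rewrite (Derive_sum4 (fun i t => 4*t*(sqdist xl yl zl (a i) (b i) (c i) + t^2 - d2 i))
      (fun i => 4*(sqdist xl yl zl (a i) (b i) (c i) + 0^2 - d2 i) + 4*0*(2*0))).
  2: { intros. apply dlin2. }
  set (D := fun i => sqdist xl yl zl (a i) (b i) (c i) - d2 i).
  set (ux := xl - xg). set (uy := yl - yg). set (uz := zl - zg).
  set (U := ux^2 + uy^2 + uz^2).
  assert (SX : sum_f_R0 (fun i => D i * (xl - a i)) (pred N) = 0).
  { rewrite GX in Gx. replace (sum_f_R0 (fun i => D i * (xl - a i)) (pred N)) with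
      (/4 * sum_f_R0 (fun i => 4 * (sqdist xl yl zl (a i) (b i) (c i) - d2 i) * (xl - a i)) (pred N)).
    exact Gx. rewrite <- sum_scal. apply sum_ext. intros; unfold D; field. }
  assert (SY : sum_f_R0 (fun i => D i * (yl - b i)) (pred N) = 0).
  { rewrite GY in Gy. replace (sum_f_R0 (fun i => D i * (yl - b i)) (pred N)) with
      (/4 * sum_f_R0 (fun i => 4 * (sqdist xl yl zl (a i) (b i) (c i) - d2 i) * (yl - b i)) (pred N)).
    exact Gy. rewrite <- sum_scal. apply sum_ext. intros; unfold D; field. }
  assert (SZ : sum_f_R0 (fun i => D i * (zl - c i)) (pred N) = 0).
  { rewrite GZ in Gz. replace (sum_f_R0 (fun i => D i * (zl - c i)) (pred N)) with
      (/4 * sum_f_R0 (fun i => 4 * (sqdist xl yl zl (a i) (b i) (c i) - d2 i) * (zl - c i)) (pred N)).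
    exact Gz. rewrite <- sum_scal. apply sum_ext. intros; unfold D; field. }
  assert (KEY : sum_f_R0 (fun i => D i ^ 2) (pred N) + U * sum_f_R0 D (pred N) = 0).
  { rewrite <- sum_lin2.
    rewrite (sum_ext _ (fun i => (2*ux) * (D i * (xl - a i)) + (2*uy) * (D i * (yl - b i))
                                 + (2*uz) * (D i * (zl - c i)))).
    - rewrite sum_lin3, SX, SY, SZ. ring.
    - intros i. unfold D, U, ux, uy, uz. rewrite Hd2. unfold sqdist. ring. }
  assert (F0 : F2 N a b c xg yg zg xg yg zg = 0).
  { unfold F2, sumN. rewrite sum_zero; [ring|]. intros. fold (d2 i). rewrite Hd2. ring. }
  assert (FL : F2 N a b c xg yg zg xl yl zl = / 4 * sum_f_R0 (fun i => D i ^ 2) (pred N)).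
  { reflexivity. }
  specialize (Hmin _ _ _ Hne). rewrite F0, FL in Hmin.
  assert (UP : 0 < U).
  { unfold U, ux, uy, uz.
    destruct (Req_dec xl xg); [destruct (Req_dec yl yg); [destruct (Req_dec zl zg)|]|].
    - subst. now exfalso.
    - assert (zl - zg <> 0) by lra. assert (0 < (zl-zg)^2) by (apply pow2_gt_0; auto). pose proof (pow2_ge_0 (xl-xg)); pose proof (pow2_ge_0 (yl-yg)); pose proof (pow2_ge_0 (zl-zg)); lra.
    - assert (yl - yg <> 0) by lra. assert (0 < (yl-yg)^2) by (apply pow2_gt_0; auto). pose proof (pow2_ge_0 (xl-xg)); pose proof (pow2_ge_0 (yl-yg)); pose proof (pow2_ge_0 (zl-zg)); lra.
    - assert (xl - xg <> 0) by lra. assert (0 < (xl-xg)^2) by (apply pow2_gt_0; auto). pose proof (pow2_ge_0 (xl-xg)); pose proof (pow2_ge_0 (yl-yg)); pose proof (pow2_ge_0 (zl-zg)); lra. }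
  replace (sum_f_R0 (fun i => 4 * (sqdist xl yl zl (a i) (b i) (c i) + 0 ^ 2 - d2 i) + 4 * 0 * (2 * 0)) (pred N))
    with (4 * sum_f_R0 D (pred N)).
  2: { rewrite <- sum_scal. apply sum_ext. intros; unfold D; ring. }
  nra.
Qed.
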